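(* Consider the system $\frac{dT}{dt}=s+r_TT\left(1-\frac{T+I}{T_{\max}}\right)-dT-\frac{bTV}{T+I}$, $\frac{dI}{dt}=r_II\left(1-\frac{T+I}{T_{\max}}\right)+\frac{bTV}{T+I}-\delta I$, $\frac{dV}{dt}=\rho R^*I-cV-\frac{bTV}{T+I}$, with $\rho$ as bifurcation parameter. There exist parameter values for which $\delta>r_I(1-p_0/T_{\max})$, ${\cal R}_0=1$, zero is a simple eigenvalue of the Jacobian at the DFE with all other eigenvalues having negative real parts, $b_{VW}>0$ and $a>0$; and there exist parameter values for which the same hold but with $a<0$. Thus the system exhibits both backward and forward bifurcations.
   Context: Parameters $s,r_T,T_{\max},d,b,r_I,\delta,\rho,R^*,c$ are positive constants. Let $p_0=\left(r_T-d+\sqrt{(r_T-d)^2+\frac{4sr_T}{T_{\max}}}\right)\frac{T_{\max}}{2r_T}$, $a_{11}=\sqrt{(r_T-d)^2+\frac{4sr_T}{T_{\max}}}$, $a_{12}=\frac{p_0r_T}{T_{\max}}$. The disease-free equilibrium (DFE) is $x_0=(T,I,V)=(p_0,0,0)$ (independent of $\rho$); $I,V$ are the infected variables. For $\delta>r_I(1-p_0/T_{\max})$, ${\cal R}_0=\frac{b\rho R^*}{(b+c)\left(\delta-r_I(1-\frac{p_0}{T_{\max}})\right)}$. Ordering variables as $(T,I,V)$ and writing $f=(f_1,f_2,f_3)$ for the right-hand side, let $v=(0,b+c,b)$ and $w=(-a_{12}(b+c)-b\rho R^*,\,a_{11}(b+c),\,a_{11}\rho R^* )$ (left and right null vectors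 of the Jacobian at the DFE when ${\cal R}_0=1$). Define $a=\frac12\sum_{i,j,k}v_iw_jw_k\frac{\partial^2f_i}{\partial x_j\partial x_k}(x_0)$ and $b_{VW}=\sum_{i,j}v_iw_j\frac{\partial^2f_i}{\partial x_j\partial\rho}(x_0)$ (van den Driessche–Watmough coefficients; $a>0,b_{VW}>0$ indicates a backward bifurcation and $a<0,b_{VW}>0$ a forward bifurcation at ${\cal R}_0=1$). *)

(* Defs.v *)
From HB Require Import structures.
From mathcomp Require Import all_boot all_order all_algebra.
From mathcomp Require Import all_classical all_reals all_analysis.
From mathcomp Require Import Rstruct Rstruct_topology complex.
Set Implicit Arguments. Unset Strict Implicit. Unset Printing Implicit Defensive.
Import Order.TTheory GRing.Theory Num.Theory.
Local Open Scope ring_scope.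

Notation R := Rdefinitions.R.

Record params := Params {
  p_s : R; p_rT : R; p_Tmax : R; p_d : R; p_b : R;
  p_rI : R; p_delta : R; p_rho : R; p_Rstar : R; p_c : R }.

Definition params_pos (p : params) : Prop :=
  0 < p_s p /\ 0 < p_rT p /\ 0 < p_Tmax p /\ 0 < p_d p /\ 0 < p_b p /\
  0 < p_rI p /\ 0 < p_delta p /\ 0 < p_rho p /\ 0 < p_Rstar p /\ 0 < p_c p.

Definition with_rho (p : params) (r : R) : params :=
  Params (p_s p) (p_rT p) (p_Tmax p) (p_d p) (p_b p)
         (p_rI p) (p_delta p) r (p_Rstar p) (p_c p).

Definition state := 'I_3 -> R.
Definition xT (x : state) : R := x (inord 0).
Definition xI (x : state) : R := x (inord 1).
Definition xV (x : state) : R := x (inord 2).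

Definition rhs (p : params) (i : 'I_3) (x : state) : R :=
  let T := xT x in let I := xI x in let V := xV x in
  let inf := p_b p * T * V / (T + I) in
  if val i == 0%N then
    p_s p + p_rT p * T * (1 - (T + I) / p_Tmax p) - p_d p * T - inf
  else if val i == 1%N then
    p_rI p * I * (1 - (T + I) / p_Tmax p) + inf - p_delta p * I
  else
    p_rho p * p_Rstar p * I - p_c p * V - inf.

Definition shift (x : state) (j : 'I_3) (h : R) : state :=
  fun k => x k + (if k == j then h else 0).
Definition partial (j : 'I_3) (g : state -> R) (x : state) : R :=
  derive1 (fun h : R^o => (g (shift x j h) : R^o)) 0.

Definition p0 (p : params) : R :=
  (p_rT p - p_d p + Num.sqrt ((p_rT p - p_d p) ^+ 2 + 4 * p_s p * p_rT p / p_Tmax p))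
  * p_Tmax p / (2 * p_rT p).
Definition a11 (p : params) : R :=
  Num.sqrt ((p_rT p - p_d p) ^+ 2 + 4 * p_s p * p_rT p / p_Tmax p).
Definition a12 (p : params) : R := p0 p * p_rT p / p_Tmax p.

Definition dfe (p : params) : state :=
  fun k => if val k == 0%N then p0 p else 0.

Definition R0 (p : params) : R :=
  p_b p * p_rho p * p_Rstar p /
  ((p_b p + p_c p) * (p_delta p - p_rI p * (1 - p0 p / p_Tmax p))).

Definition jac (p : params) : 'M[R]_3 :=
  \matrix_(i, j) partial j (rhs p i) (dfe p).

Definition zero_simple_rest_stable (A : 'M[R]_3) : Prop :=
  let q := map_poly (real_complex R) (char_poly A) in
  mup 0 q = 1%N /\ forall z : R[i], root q z -> z != 0 -> complex.Re z < 0.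

(* Left and right null vectors v, w. *)
Definition vvec (p : params) (i : 'I_3) : R :=
  if val i == 0%N then 0 else if val i == 1%N then p_b p + p_c p else p_b p.
Definition wvec (p : params) (i : 'I_3) : R :=
  if val i == 0%N then - a12 p * (p_b p + p_c p) - p_b p * p_rho p * p_Rstar p
  else if val i == 1%N then a11 p * (p_b p + p_c p)
  else a11 p * p_rho p * p_Rstar p.

(* van den Driessche--Watmough coefficients. *)
Definition coef_a (p : params) : R :=
  2^-1 * \sum_(i < 3) \sum_(j < 3) \sum_(k < 3)
    vvec p i * wvec p j * wvec p k *
    partial k (partial j (rhs p i)) (dfe p).

Definition coef_b (p : params) : R :=
  \sum_(i < 3) \sum_(j < 3)
    vvec p i * wvec p j *
    derive1 (fun r : R^o => (partial j (rhs (with_rho p r) i) (dfe p) : R^o)) (p_rho p).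

Definition bif_conditions (p : params) : Prop :=
  [/\ params_pos p,
      p_delta p > p_rI p * (1 - p0 p / p_Tmax p),
      R0 p = 1,
      zero_simple_rest_stable (jac p)
    & coef_b p > 0].

(* Main.v *)
Require Import Defs.
From HB Require Import structures.
From mathcomp Require Import all_boot all_order all_algebra.
From mathcomp Require Import all_classical all_reals all_analysis.
From mathcomp Require Import Rstruct Rstruct_topology complex.
From mathcomp Require Import ring lra.
Import Order.TTheory GRing.Theory Num.Theory.
Local Open Scope ring_scope.

Definition Dv (f : R -> R) (x d : R) := is_derive (x : R^o) (1 : R^o) (f : R^o -> R^o) (d : R^o).

Lemma dC (c x : R) : Dv (fun _ => c) x 0.
Proof. exact: is_derive_cst. Qed.
Lemma dI (x : R) : Dv (fun h => h) x 1.
Proof. exact: is_derive_id. Qed.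
Lemma dAdd f g x a b : Dv f x a -> Dv g x b -> Dv (fun h => f h + g h) x (a + b).
Proof. move=> ha hb; exact: is_deriveD. Qed.
Lemma dOpp f x a : Dv f x a -> Dv (fun h => - f h) x (- a).
Proof. move=> ha; exact: is_deriveN. Qed.
Lemma dMul f g x a b : Dv f x a -> Dv g x b -> Dv (fun h => f h * g h) x (f x * b + g x * a).
Proof. move=> ha hb; exact: is_deriveM. Qed.
Lemma dInv f x a : f x != 0 -> Dv f x a -> Dv (fun h => (f h)^-1) x (- a / (f x ^+ 2)).
Proof. move=> h0 ha. apply: is_derive_eq. apply: (is_deriveV h0 ha).
by change (- f x ^- 2 * a = - a / f x ^+ 2); rewrite mulNr mulrC mulNr. Qed.
Lemma Dv_val f x d : Dv f x d -> derive1 (f : R^o -> R^o) x = d.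
Proof. by move=> H; rewrite derive1E; apply: derive_val. Qed.

Ltac nzside := cbv beta; rewrite ?mul0r ?addr0 ?mulr0 ?add0r; try assumption; try (by rewrite ?mulf_neq0).
Ltac dv := first
 [ eapply dC
 | eapply dI
 | eapply dAdd; [dv | dv]
 | eapply dOpp; dv
 | eapply dMul; [dv | dv]
 | eapply dInv; [ nzside | dv ] ].

Definition ev (n : nat) (j : 'I_3) : R := if val j == n then 1 else 0.

Definition RH (p : params) (n : nat) (T I V : R) : R :=
  let inf := p_b p * T * V / (T + I) in
  if n == 0%N then
    p_s p + p_rT p * T * (1 - (T + I) / p_Tmax p) - p_d p * T - inf
  else if n == 1%N then
    p_rI p * I * (1 - (T + I) / p_Tmax p) + inf - p_delta p * I
  else
    p_rho p * p_Rstar p * I - p_c p * V - inf.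

Lemma rhsE p i x : rhs p i x = RH p (val i) (xT x) (xI x) (xV x).
Proof. by []. Qed.

Lemma shiftE (n : nat) (x : state) (j : 'I_3) (h : R) : (n < 3)%N -> Defs.shift x j h (inord n) = x (inord n) + h * ev n j.
Proof.
move=> hn; rewrite /Defs.shift /ev.
have -> : ((inord n : 'I_3) == j) = (val j == n) by rewrite -val_eqE /= inordK // eq_sym.
by case: (_ == _); rewrite ?mulr1 ?mulr0.
Qed.

Definition gd p T I V u1 u2 u3 : R :=
  p_b p * (u1 * V + T * u3) / (T + I) - p_b p * T * V * (u1 + u2) / ((T + I) * (T + I)).

Definition DF p (n : nat) (T I V u1 u2 u3 : R) : R :=
  if n == 0%N then
    p_rT p * u1 * (1 - (T + I) / p_Tmax p) - p_rT p * T * (u1 + u2) / p_Tmax p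
      - p_d p * u1 - gd p T I V u1 u2 u3
  else if n == 1%N then
    p_rI p * u2 * (1 - (T + I) / p_Tmax p) - p_rI p * I * (u1 + u2) / p_Tmax p
      + gd p T I V u1 u2 u3 - p_delta p * u2
  else p_rho p * p_Rstar p * u2 - p_c p * u3 - gd p T I V u1 u2 u3.

Lemma partialE p i j x : p_Tmax p != 0 -> xT x + xI x != 0 ->
  partial j (rhs p i) x = DF p (val i) (xT x) (xI x) (xV x) (ev 0 j) (ev 1 j) (ev 2 j).
Proof.
move=> hM hS; rewrite /partial.
have -> : (fun h : R^o => (rhs p i (Defs.shift x j h) : R^o)) =
  (fun h => RH p (val i) (xT x + h * ev 0 j) (xI x + h * ev 1 j) (xV x + h * ev 2 j)).
  by apply: funext => h; rewrite rhsE /xT /xI /xV !shiftE.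
move: (ev 0 j) (ev 1 j) (ev 2 j) => u1 u2 u3.
move: hS; move: (xT x) (xI x) (xV x) => T I V hS.
case: i => [[|[|[|k]]] hk] //=; rewrite /RH /DF /gd /=.
all: apply: etrans; [apply: Dv_val; dv|].
all: cbv beta; rewrite ?mul0r ?addr0; field.
all: by rewrite ?hS ?hM ?mulf_neq0.
Qed.

Lemma dfeT p : xT (dfe p) = p0 p. Proof. by rewrite /xT /dfe /= inordK. Qed.
Lemma dfeI p : xI (dfe p) = 0. Proof. by rewrite /xI /dfe /= inordK. Qed.
Lemma dfeV p : xV (dfe p) = 0. Proof. by rewrite /xV /dfe /= inordK. Qed.

Lemma near_derive1 (f g : R -> R) :
  (\forall h \near (0 : R^o), f h = g h) ->
  derive1 (f : R^o -> R^o) 0 = derive1 (g : R^o -> R^o) 0.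
Proof. by move=> H; rewrite !derive1E; apply: near_eq_derive. Qed.

Definition SDF p (n : nat) (u1 u2 u3 w1 w2 w3 : R) : R :=
  if n == 0%N then
    - 2 * p_rT p / p_Tmax p * u1 * w1 - p_rT p / p_Tmax p * (u1 * w2 + u2 * w1)
    + p_b p / p0 p * (u2 * w3 + u3 * w2)
  else if n == 1%N then
    - p_rI p / p_Tmax p * (u1 * w2 + u2 * w1) - 2 * p_rI p / p_Tmax p * u2 * w2
    - p_b p / p0 p * (u2 * w3 + u3 * w2)
  else p_b p / p0 p * (u2 * w3 + u3 * w2).

Lemma partial2E p i j k : 0 < p0 p -> p_Tmax p != 0 ->
  partial k (partial j (rhs p i)) (dfe p) =
  SDF p (val i) (ev 0 j) (ev 1 j) (ev 2 j) (ev 0 k) (ev 1 k) (ev 2 k).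
Proof.
move=> hP hM.
have -> : partial k (partial j (rhs p i)) (dfe p) = derive1 (fun h : R^o => (partial j (rhs p i) (Defs.shift (dfe p) k h) : R^o)) 0 by [].
rewrite (@near_derive1 (fun h : R => (partial j (rhs p i) (Defs.shift (dfe p) k h))) (fun h => DF p (val i) (p0 p + h * ev 0 k) (0 + h * ev 1 k) (0 + h * ev 2 k)
   (ev 0 j) (ev 1 j) (ev 2 j))); last first.
  apply: filterS (nbhs0_lt hP) => h hh.
  rewrite partialE //; first by rewrite /xT /xI /xV !shiftE // -/(xT _) -/(xI _) -/(xV _) dfeT dfeI dfeV.
  rewrite /xT /xI /xV !shiftE // -/(xT _) -/(xI _) -/(xV _) dfeT dfeI.
  move: hh; rewrite ltr_norml => /andP[h1 h2].
  case: k => [[|[|[|kk]]] hk] //; rewrite /ev /= ?mulr1 ?mulr0 ?addr0 ?add0r gt_eqF //; lra.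
move: (ev 0 j) (ev 1 j) (ev 2 j) => u1 u2 u3.
have hP0 : p0 p != 0 by rewrite gt_eqF.
case: k => [[|[|[|kk]]] hk] //; rewrite /ev /=.
all: case: i => [[|[|[|ii]]] hi] //=; rewrite /SDF /DF /gd /=.
all: move: (p0 p) hP0 => P hP0.
all: apply: etrans; [apply: Dv_val; dv|].
all: cbv beta; rewrite ?mul0r ?addr0 ?mulr0 ?mulr1 ?add0r; field.
all: by rewrite ?hP0 ?hM ?mulf_neq0.
Qed.

Lemma rhoE p i j : 0 < p0 p -> p_Tmax p != 0 ->
  derive1 (fun r : R^o => (partial j (rhs (with_rho p r) i) (dfe p) : R^o)) (p_rho p)
  = if val i == 2%N then p_Rstar p * ev 1 j else 0.
Proof.
move=> hP hM.
have hS : xT (dfe p) + xI (dfe p) != 0 by rewrite dfeT dfeI addr0 gt_eqF.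
have -> : (fun r : R^o => (partial j (rhs (with_rho p r) i) (dfe p) : R^o)) =
  (fun r => DF (with_rho p r) (val i) (p0 p) 0 0 (ev 0 j) (ev 1 j) (ev 2 j)).
  by apply: funext => r; rewrite partialE // dfeT dfeI dfeV.
have hP0 : p0 p != 0 by rewrite gt_eqF.
move: (ev 0 j) (ev 1 j) (ev 2 j) (p0 p) hP0 => u1 u2 u3 P hP0.
case: i => [[|[|[|ii]]] hi] //=; rewrite /DF /gd /=.
all: apply: etrans; [apply: Dv_val; dv|].
all: cbv beta; rewrite ?mul0r ?addr0 ?mulr0 ?mulr1 ?add0r; try first [done | field].
all: done.
Qed.

Definition P (r : R) : params := Params 1 1 1 1 1 r 2 4 1 1.

Lemma sqrt4 : Num.sqrt (4 : R) = 2.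
Proof. by rewrite (_ : 4 = 2 ^+ 2) ?sqrtr_sqr ?ger0_norm // expr2 -natrM. Qed.

Lemma a11P r : a11 (P r) = 2.
Proof. by rewrite /a11 /= subrr expr0n /= add0r !mulr1 invr1 mulr1 sqrt4. Qed.
Lemma p0P r : p0 (P r) = 1.
Proof. rewrite /p0 -/(a11 (P r)) a11P /=. by field. Qed.
Lemma a12P r : a12 (P r) = 1.
Proof. rewrite /a12 p0P /=. by field. Qed.

Lemma coef_aP r : coef_a (P r) = 16 * r - 32.
Proof.
have hP : 0 < p0 (P r) by rewrite p0P.
have hM : p_Tmax (P r) != 0 by rewrite /= oner_neq0.
rewrite /coef_a.
under eq_bigr => i _ do under eq_bigr => j _ do under eq_bigr => k _ do rewrite partial2E //.
rewrite !big_ord_recl !big_ord0 /=.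
rewrite /vvec /wvec /SDF /ev /= p0P a11P a12P.

by field.
Qed.

Lemma coef_bP r : coef_b (P r) = 4.
Proof.
have hP : 0 < p0 (P r) by rewrite p0P.
have hM : p_Tmax (P r) != 0 by rewrite /= oner_neq0.
rewrite /coef_b.
under eq_bigr => i _ do under eq_bigr => j _ do rewrite rhoE //.
rewrite !big_ord_recl !big_ord0 /=.
rewrite /vvec /wvec /ev /= a11P a12P.

by field.
Qed.

Definition Jl : seq (seq R) := [:: [:: -2; -1; -1]; [:: 0; -2; 1]; [:: 0; 4; -2]].

Lemma jacE r (i j : 'I_3) : partial j (rhs (P r) i) (dfe (P r)) = nth 0 (nth [::] Jl (val i)) (val j).
Proof.
have hP : 0 < p0 (P r) by rewrite p0P.
have hM : p_Tmax (P r) != 0 by rewrite /= oner_neq0.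
have hS : xT (dfe (P r)) + xI (dfe (P r)) != 0 by rewrite dfeT dfeI addr0 gt_eqF.
rewrite partialE // dfeT dfeI dfeV p0P.
case: i => [[|[|[|ii]]] hi] //; case: j => [[|[|[|jj]]] hj] //; rewrite /DF /gd /ev /=; by field.
Qed.

Lemma charP r : char_poly (jac (P r)) = 'X * ('X + 2%:P) * ('X + 4%:P).
Proof.
rewrite /char_poly /char_poly_mx (expand_det_col _ ord0) !big_ord_recl big_ord0 /cofactor.
rewrite !(expand_det_col _ ord0) !big_ord_recl !big_ord0 /cofactor !det_mx11.
rewrite !mxE /= !jacE /=.
rewrite !polyCN.
ring.
Qed.

Lemma zsP r : zero_simple_rest_stable (jac (P r)).
Proof.
rewrite /zero_simple_rest_stable charP.
rewrite !rmorphM /= !map_polyXaddC map_polyX.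
set a := real_complex R 2. set b := real_complex R 4.
have ha : ~~ root ('X + a%:P) 0.
  rewrite /root !hornerE /a. apply/eqP; case => /eqP. by rewrite pnatr_eq0.
have hb : ~~ root ('X + b%:P) 0.
  rewrite /root !hornerE /b. apply/eqP; case => /eqP. by rewrite pnatr_eq0.
split.
  rewrite mupMl // mupMl //.
  by rewrite -[X in mup _ X]subr0 -[X in mup _ (_ - X)]polyC0 -[X in mup _ X]expr1 mup_XsubCX eqxx.
move=> z; rewrite !rootM => /orP[/orP[]|].
- by rewrite /root hornerX => ->.
- rewrite /root !hornerE addr_eq0 => /eqP -> _; rewrite /a /=.
  by rewrite oppr_lt0 ltr0n.
- rewrite /root !hornerE addr_eq0 => /eqP -> _; rewrite /b /=.
  by rewrite oppr_lt0 ltr0n.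
Qed.

Lemma bifP r : 0 < r -> bif_conditions (P r).
Proof.
move=> hr; split.
- rewrite /params_pos /=; do 9 (split; first by rewrite ?ltr0n ?ltr01). by rewrite ltr01.
- rewrite /= p0P divr1 subrr mulr0; by rewrite ltr0n.
- rewrite /R0 /= p0P divr1 subrr mulr0 subr0. by field.
- exact: zsP.
- by rewrite coef_bP ltr0n.
Qed.

Theorem theorem3 :
  (exists p : params, bif_conditions p /\ coef_a p > 0) /\
  (exists p : params, bif_conditions p /\ coef_a p < 0).
Proof.
split.
- exists (P 8); split; first by apply: bifP; rewrite ltr0n.
  rewrite coef_aP. lra.
- exists (P 1); split; first by apply: bifP; rewrite ltr01.
  rewrite coef_aP. lra.
Qed.
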